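(* Assume $n\ge 3t+1$. In any execution of COOL, if $\eta^{[2]}\ge 1$, then for every honest processor $i$ with $s^{[2]}_i=1$, the number of honest processors $j$ with $\boldsymbol w_j=\boldsymbol w_i$ is at least $n-9t/4$. (Equivalently, each of the $\eta^{[2]}$ initial messages counted by $\eta^{[2]}$ is held by at least $n-9t/4$ honest processors.)
   Context: Setting. $n$ processors indexed by $[1:n]$, pairwise joined by reliable private synchronous channels; recipients know senders. At most $t$ processors are dishonest, controlled by an adversary who may make them deviate arbitrarily (missing values replaced by a fixed default); the others are honest. Processor $i$ holds an $\ell$-bit initial message $\boldsymbol w_i$. $\phi$ is a default value different from every $\ell$-bit message. Logarithms are base 2. Code. $k=\lfloor t/5\rfloor+1$, $c=\lceil \max\{\ell,(t/5+1)\log(n+1)\}/k\rceil$. Messages are zero-padded to $kc$ bits and viewed in $GF(2^c)^k$. Integers in $[1:n]$ are identified with distinct nonzero elements of $GF(2^c)$; $\boldsymbol h_i\in GF(2^c)^k$ has entries $h_{i,j}=\prod_{p\in[1:k],\,p\ne j}\frac{i-p}{j-p}$ (field arithmetic). COOL, Phases 1–3 (honest processor $i$). Initialization: updated message $\boldsymbol w^{(i)}:=\boldsymbol w_i$, $y^{(i)}_j:=\boldsymbol h_j^{\mathsf T}\boldsymbol w_i$, $u_i(i):=1$. Phase 1. (a) Send $(y^{(i)}_j,y^{(i)}_i)$ to each $j\ne i$. (b) For $j\ne i$, link indicator $u_i(j):=1$ if the pair received from $j$ equals $(y^{(i)}_i,y^{(i)}_j)$, else $0$. Success indicator $s_i:=1$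 if $\sum_{j=1}^n u_i(j)\ge n-t$; otherwise $s_i:=0$ and $\boldsymbol w^{(i)}:=\phi$. (c) Send $s_i$ to all; each processor records the indicator received from each $j$ (own for itself) and forms $\mathcal S_1=\{j:s_j=1\}$, $\mathcal S_0=\{j:s_j=0\}$ (views may differ between processors). Phase 2. If $s_i=1$: set $u_i(j):=0$ for all $j\in\mathcal S_0$; if now $\sum_j u_i(j)<n-t$, set $s_i:=0$, $\boldsymbol w^{(i)}:=\phi$ and send $s_i=0$ to all. Everyone overwrites recorded indicators with newly received ones and recomputes $\mathcal S_0,\mathcal S_1$. Phase 3 begins by repeating the steps of Phase 2 once more (followed by a vote and binary agreement, irrelevant here). Notation. For $p\in\{1,2,3\}$, $s^{[p]}_i$ is the value of honest processor $i$'s success indicator at the end of (the indicator-updating steps of) Phase $p$, and $\eta^{[p]}$ is the number of distinct values in $\{\boldsymbol w_i: i\text{ honest},\ s^{[p]}_i=1\}$ (initial messages). *)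

(* Defs.v *)
(* Model of COOL Phases 1-2 (success indicators only). *)
From mathcomp Require Import all_boot all_order all_algebra.
Import GRing.Theory.
Local Open Scope ring_scope.

(* Processors are 'I_n; ordinal i stands for processor i+1 of [1:n]. *)

Definition cool_k (t : nat) : nat := (t %/ 5).+1.

(* c * k >= max{l, (t/5+1) log2(n+1)}, written exactly in nat:
   c*k >= (t/5+1) log2(n+1)  <=>  (n+1)^(t+5) <= 2^(5 c k). *)
Definition c_ok (n t l c : nat) : bool :=
  (l <= cool_k t * c)%N && ((n.+1) ^ (t + 5) <= 2 ^ (5 * (cool_k t * c)))%N.

(* c = ceil(max{l,(t/5+1)log(n+1)}/k) : the least c with c_ok. *)
Definition is_cool_c (n t l c : nat) : Prop :=
  c_ok n t l c /\ (forall c', c_ok n t l c' -> (c <= c')%N).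

(* emb a = the field element identified with the integer a (1 <= a <= n).
   lagr k emb x = the vector h with h_j = prod_{p in [1:k], p <> j} (x-p)/(j-p). *)
Definition lagr (F : fieldType) (k : nat) (emb : nat -> F) (x : F) : 'rV[F]_k :=
  \row_(j < k) \prod_(p < k | p != j)
     ((x - emb p.+1) / (emb j.+1 - emb p.+1)).

Definition ycode (F : fieldType) (k n : nat) (emb : nat -> F) (v : 'rV[F]_k)
  (j : 'I_n) : F :=
  \sum_(p < k) (@lagr F k emb (emb j.+1)) 0 p * v 0 p.

Section COOL.
Variables (n t : nat) (F : fieldType) (k : nat) (emb : nat -> F) (M : Type)
  (enc : M -> 'rV[F]_k) (w : 'I_n -> M) (honest : {set 'I_n})
  (adv1 : 'I_n -> 'I_n -> F * F)    (* adv1 j i : pair sent by dishonest j to i in Phase 1(a) *)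
  (advs1 : 'I_n -> 'I_n -> bool).   (* advs1 j i : indicator sent by dishonest j to i in Phase 1(c) *)

Definition cool_y (i j : 'I_n) : F := @ycode F k n emb (enc (w i)) j.

Definition cool_recv1 (i j : 'I_n) : F * F :=
  if j \in honest then (cool_y j i, cool_y j j) else adv1 j i.

Definition cool_u1 (i j : 'I_n) : bool :=
  (j == i) || (cool_recv1 i j == (cool_y i i, cool_y i j)).

Definition cool_s1 (i : 'I_n) : bool :=
  (n - t <= #|[set j | cool_u1 i j]|)%N.

Definition cool_rec1 (i j : 'I_n) : bool :=
  if j == i then cool_s1 i else if j \in honest then cool_s1 j else advs1 j i.

(* s_i^{[2]} : Phase 2 zeroes u_i(j) for j in S_0 (view of i) *)
Definition cool_s2 (i : 'I_n) : bool :=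
  cool_s1 i && (n - t <= #|[set j | cool_u1 i j && cool_rec1 i j]|)%N.

End COOL.

Definition cool_eta2 (n : nat) (M : finType) (w : 'I_n -> M) (honest : {set 'I_n})
  (s2 : 'I_n -> bool) : nat :=
  #|[set w i | i in [set i in honest | s2 i]]|.

(* Main.v *)
Require Import Defs.
From mathcomp Require Import all_boot all_order all_algebra.
From mathcomp Require Import zify.
Import GRing.Theory.
Local Open Scope ring_scope.

Section P.
Variables (F : fieldType) (k : nat) (e : nat -> F).
Hypothesis einj : forall a b : nat, (1 <= a <= k)%N -> (1 <= b <= k)%N -> e a = e b -> a = b.

Lemma lagr_eval (m j : 'I_k) : @lagr F k e (e m.+1) 0 j = (m == j)%:R.
Proof.
rewrite mxE; case: eqP => [<-|/eqP mj].
  rewrite big1 // => p pm; rewrite divff // subr_eq0; apply: contra pm => /eqP /einj.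
  by rewrite !ltn_ord => /(_ isT isT) [/val_inj ->].
by rewrite (bigD1 m) //= subrr !mul0r.
Qed.

Definition lpoly (d : 'rV[F]_k) : {poly F} :=
  \sum_(p < k) d 0 p *: ((\prod_(q < k | q != p) (e p.+1 - e q.+1))^-1 *:
      \prod_(q <- [seq q <- enum 'I_k | q != p]) ('X - (e q.+1)%:P)).

Lemma lpoly_eval d x : (lpoly d).[x] = \sum_(p < k) @lagr F k e x 0 p * d 0 p.
Proof.
rewrite /lpoly horner_sum; apply: eq_bigr => p _.
rewrite !hornerZ horner_prod mxE mulrC; congr (_ * _).
rewrite big_filter mulrC prodf_div; congr (_ / _).
rewrite big_enum_cond /=; apply: eq_bigr => q _; exact: hornerXsubC.
Qed.

Lemma lpoly_size d : (size (lpoly d) <= k)%N.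
Proof.
rewrite /lpoly; apply: (leq_trans (size_sum _ _ _)).
apply/bigmax_leqP => p _.
apply: (leq_trans (size_scale_leq _ _)); apply: (leq_trans (size_scale_leq _ _)).
rewrite size_prod_XsubC size_filter.
have := count_predC (fun q : 'I_k => q != p) (enum 'I_k).
have : (0 < count (predC (fun q : 'I_k => q != p)) (enum 'I_k))%N.
  by rewrite -has_count; apply/hasP; exists p; rewrite ?mem_enum //= eqxx.
rewrite size_enum_ord => h1 h2; apply: (@leq_trans (count (fun q : 'I_k => q != p) (enum 'I_k)).+1) => //.
apply: (leq_trans _ (eq_leq h2)); by rewrite -addn1 leq_add2l.
Qed.
End P.

Section Z.
Variables (F : fieldType) (k n : nat) (e : nat -> F).
Hypothesis kn : (k <= n)%N.
Hypothesis einj : forall a b : nat, (1 <= a <= n)%N -> (1 <= b <= n)%N -> e a = e b -> a = b.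

Lemma zero_count (d : 'rV[F]_k) : d != 0 ->
  (#|[set q : 'I_n | @ycode F k n e d q == 0%R]| < k)%N.
Proof.
move=> dn0.
have einjk : forall a b : nat, (1 <= a <= k)%N -> (1 <= b <= k)%N -> e a = e b -> a = b.
  move=> a b /andP[a1 ak] /andP[b1 bk]; apply: einj; rewrite ?a1 ?b1 /=.
    exact: leq_trans ak kn.
  exact: leq_trans bk kn.
have [p dp] : exists p, d 0 p != 0.
  apply/existsP; apply: contraR dn0; rewrite negb_exists => /forallP H.
  apply/eqP/matrixP => i j; rewrite ord1 mxE; exact/eqP/negPn/H.
set P := @lpoly F k e d.
have Pn0 : P != 0.
  apply: contraNneq dp => P0.
  have := @lpoly_eval F k e d (e p.+1); rewrite -/P P0 horner0 => ->.
  rewrite (bigD1 p) //= (@lagr_eval F k e einjk) eqxx mul1r big1 ?addr0 //.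
  by move=> q qp; rewrite (@lagr_eval F k e einjk) eq_sym (negbTE qp) mul0r.
set Z := [set q : 'I_n | _].
have : (size [seq e (nat_of_ord q).+1 | q : 'I_n <- enum Z] < size P)%N.
  apply: max_poly_roots => //.
    apply/allP => x /mapP[q]; rewrite mem_enum inE => /eqP qZ ->.
    by rewrite /root /P lpoly_eval; apply/eqP; exact: qZ.
  rewrite map_inj_in_uniq; first exact: enum_uniq. move=> a b _ _ /einj.
  by rewrite !ltn_ord /= => /(_ isT isT) [/val_inj].
rewrite size_map -cardE => h; apply: leq_trans h _; exact: lpoly_size.
Qed.
End Z.

Lemma cardU_le (T : finType) (A B : {set T}) : (#|A :|: B| <= #|A| + #|B|)%N.
Proof. by rewrite -cardsUI leq_addr. Qed.

Lemma card3 (T : finType) (X Y W : {set T}) :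
  (#|X| + #|Y| + #|W| <= #|X :|: Y :|: W| + #|X :&: Y| + #|X :&: W| + #|Y :&: W|)%N.
Proof.
have h1 := cardsUI (X :|: Y) W.
have h2 := cardsUI X Y.
have h3 : (#|(X :|: Y) :&: W| <= #|X :&: W| + #|Y :&: W|)%N.
  by rewrite setIUl cardU_le.
lia.
Qed.

Section Main.
Variables (n t l : nat) (F : finFieldType) (emb : nat -> F)
  (enc : l.-tuple bool -> 'rV[F]_(cool_k t)) (w : 'I_n -> l.-tuple bool)
  (honest : {set 'I_n})
  (adv1 : 'I_n -> 'I_n -> F * F) (advs1 : 'I_n -> 'I_n -> bool).
Local Notation k := (cool_k t).
Local Notation u1 := (@cool_u1 n F k emb _ enc w honest adv1).
Local Notation yy := (@cool_y n F k emb _ enc w).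
Definition NN (x : 'I_n) := [set j in honest | u1 x j].

Lemma link x {q} : q \in honest -> u1 x q -> yy x q = yy q q.
Proof.
move=> qh; rewrite /cool_u1; case: eqP => [-> //|qx] /=.
by rewrite /cool_recv1 qh => /eqP [_ ->].
Qed.

Lemma ycodeB (d1 d2 : 'rV[F]_k) q :
  @ycode F k n emb (d1 - d2) q = @ycode F k n emb d1 q - @ycode F k n emb d2 q.
Proof.
rewrite /ycode -sumrB; apply: eq_bigr => p _; by rewrite !mxE mulrBr.
Qed.

Hypothesis hn : (3 * t + 1 <= n)%N.
Hypothesis ht : (#|~: honest| <= t)%N.
Lemma kn : (k <= n)%N.
Proof. rewrite /cool_k; lia. Qed.
Hypothesis einj : forall a b : nat, (1 <= a <= n)%N -> (1 <= b <= n)%N -> emb a = emb b -> a = b.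
Hypothesis encinj : injective enc.

Lemma inter_sub x y : w x != w y ->
  NN x :&: NN y \subset [set q : 'I_n | @ycode F k n emb (enc (w x) - enc (w y)) q == 0%R].
Proof.
move=> _; apply/subsetP => q; rewrite !inE => /andP[/andP[qh ux] /andP[_ uy]].
rewrite ycodeB subr_eq0; apply/eqP.
have := link x qh ux; have := link y qh uy; rewrite /cool_y => -> -> //.
Qed.

Lemma inter_card x y : w x != w y -> (#|NN x :&: NN y| <= t %/ 5)%N.
Proof.
move=> wxy; have := subset_leq_card (@inter_sub x y wxy).
have : (enc (w x) - enc (w y)) != 0 by rewrite subr_eq0; apply: contra wxy => /eqP /encinj ->.
move=> /(@zero_count F k n emb kn einj) h1 h2.
have := leq_ltn_trans h2 h1; rewrite /cool_k ltnS //.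
Qed.

Lemma N_size x : cool_s1 n t F k emb _ enc w honest adv1 x ->
  (n - t <= #|NN x| + #|~: honest|)%N.
Proof.
rewrite /cool_s1 => h; apply: (leq_trans h); have := cardU_le _ (NN x) (~: honest); apply: leq_trans.
apply: subset_leq_card; apply/subsetP => j; rewrite !inE => uj.
by case: (j \in honest); rewrite ?uj.
Qed.

Local Notation s1 := (@cool_s1 n t F k emb _ enc w honest adv1).
Local Notation rec1 := (@cool_rec1 n t F k emb _ enc w honest adv1 advs1).
Local Notation N := NN.
Lemma Hc : (#|honest| + #|~: honest| = n)%N.
Proof. by rewrite cardsC card_ord. Qed.

Lemma three x y z : x \in honest -> y \in honest -> z \in honest ->
  s1 x -> s1 y -> s1 z -> w x != w y -> w x != w z -> w y != w z -> False.
Proof.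
move=> hx hy hz sx sy sz nxy nxz nyz.
have := card3 _ (N x) (N y) (N z).
have hU : (#|N x :|: N y :|: N z| <= #|honest|)%N.
  apply: subset_leq_card; apply/subsetP => j; rewrite !inE.
  by case: (j \in honest); rewrite ?andbF.
have := N_size x sx; have := N_size y sy; have := N_size z sz.
have := inter_card x y nxy.
have := inter_card x z nxz.
have := inter_card y z nyz.
have := Hc.
lia.
Qed.

Lemma key (i : 'I_n) : i \in honest ->
  cool_s2 n t F k emb _ enc w honest adv1 advs1 i ->
  (4 * n <= 4 * #|[set j in honest | w j == w i]| + 9 * t)%N.
Proof.
move=> ih; rewrite /cool_s2 => /andP[s1i Bs].
set B := [set j in honest | u1 i j && rec1 i j].
have Bsize : (n - t <= #|B| + #|~: honest|)%N.
  apply: (leq_trans Bs); have := cardU_le _ B (~: honest); apply: leq_trans.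
  apply: subset_leq_card; apply/subsetP => j; rewrite !inE => uj.
  by case: (j \in honest); rewrite ?uj.
have BN : B \subset N i.
  by apply/subsetP => j; rewrite !inE => /andP[-> /andP[-> _]].
have Bs1 : forall j, j \in B -> s1 j.
  move=> j; rewrite !inE => /andP[jh /andP[_]]; rewrite /cool_rec1.
  by case: eqP => [->|_]; rewrite ?jh.
have Bh : forall j, j \in B -> j \in honest by move=> j; rewrite inE => /andP[].
set G := [set j in honest | w j == w i].
have hc := Hc.
case: (boolP [exists j in B, w j != w i]).
- case/exists_inP => j0 j0B wj0.
  have sub : B :\: G \subset
     [set q : 'I_n | @ycode F k n emb (enc (w i) - enc (w j0)) q == 0%R].
    apply/subsetP => j; rewrite inE => /andP[jnG jB].
    have jh := Bh j jB.
    have wji : w j != w i by move: jnG; rewrite !inE jh.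
    case: (eqVneq (w j) (w j0)) => [e|ne].
      have := subsetP (@inter_sub i j (ltac:(by rewrite eq_sym))) j.
      rewrite e; apply; rewrite inE; apply/andP; split.
        exact: (subsetP BN).
      by rewrite inE jh /cool_u1 eqxx.
    exfalso; apply: (@three i j0 j) => //.
    - exact: Bh.
    - exact: Bs1.
    - exact: Bs1.
    - by rewrite eq_sym.
    - by rewrite eq_sym.
    - by rewrite eq_sym.
  have z := @zero_count F k n emb kn einj (enc (w i) - enc (w j0)).
  have : (enc (w i) - enc (w j0)) != 0 by rewrite subr_eq0; apply: contra wj0 => /eqP /encinj ->.
  move=> /z {}z.
  have c1 := subset_leq_card sub.
  have c2 := cardsID G B.
  have c3 : (#|B :&: G| <= #|G|)%N by apply: subset_leq_card; apply: subsetIr.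
  have c4 : (#|B :\: G| < (t %/ 5).+1)%N := leq_ltn_trans c1 z.
  clear c1 z sub.
  lia.
- move=> nex.
  have : B \subset G.
    apply/subsetP => j jB; rewrite inE Bh //=.
    by apply: contraR nex => h; apply/exists_inP; exists j.
  move/subset_leq_card => c.
  lia.
Qed.
End Main.

Theorem lemma9 (n t l c : nat) (F : finFieldType) (emb : nat -> F)
  (enc : l.-tuple bool -> 'rV[F]_(cool_k t)) (w : 'I_n -> l.-tuple bool)
  (honest : {set 'I_n})
  (adv1 : 'I_n -> 'I_n -> F * F) (advs1 : 'I_n -> 'I_n -> bool) :
  (3 * t + 1 <= n)%N ->
  is_cool_c n t l c ->
  #|F| = (2 ^ c)%N ->
  (forall a b : nat, (1 <= a <= n)%N -> (1 <= b <= n)%N -> emb a = emb b -> a = b) ->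
  (forall a : nat, (1 <= a <= n)%N -> emb a != 0%R) ->
  injective enc ->
  (#|~: honest| <= t)%N ->
  let s2 := @cool_s2 n t F (cool_k t) emb (l.-tuple bool) enc w honest adv1 advs1 in
  (1 <= @cool_eta2 n _ w honest s2)%N ->
  forall i : 'I_n, i \in honest -> s2 i ->
    (4 * n <= 4 * #|[set j in honest | w j == w i]| + 9 * t)%N.
Proof.
move=> hn _ _ einj _ encinj ht s2 _ i ih si.
exact: (@key n t l F emb enc w honest adv1 advs1 hn ht einj encinj i ih si).
Qed.
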